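(* Let $\mathrm{f}$ be a chief factor function, $G$ a finite group, $K\trianglelefteq G$, and $H/T$ a non-abelian chief factor of $G$ with $K\le T$. Define $Z_1,Z_2$ by $Z_1/K=\mathrm{Z}(G/K,\mathrm{f})\cap T/K$ and $Z_2/K=\mathrm{Z}(G/K,\mathrm{f})\cap H/K$. If $\mathrm{f}(H/T,G)=0$ then $Z_2=Z_1$. If $\mathrm{f}(H/T,G)=1$, let $C$ be the subgroup with $Z_1\le C$ and $C/Z_1=\big(C_{H/Z_1}(T/Z_1)\big)^{\mathfrak{S}}$. Then $Z_2\ne Z_1$ if and only if $|C/Z_1|=|H/T|$, and in that case $Z_2=C$.
   Context: A chief factor function is a function $\mathrm{f}$ assigning $0$ or $1$ to every pair $(H/K,G)$ with $G$ a finite group and $H/K$ a chief factor of $G$, such that: (1) $\mathrm{f}(H/K,G)=\mathrm{f}(M/N,G)$ whenever $H/K$ and $M/N$ are $G$-isomorphic chief factors of $G$; (2) $\mathrm{f}(H/K,G)=\mathrm{f}((H/N)/(K/N),G/N)$ for every $N\trianglelefteq G$ with $N\le K$. $\mathrm{Z}(G,\mathrm{f})$ denotes the greatest normal subgroup of $G$ such that $\mathrm{f}(H/K,G)=1$ for every chief factor $H/K$ of $G$ with $H\le \mathrm{Z}(G,\mathrm{f})$. For a group $X$, $X^{\mathfrak{S}}$ is the soluble residual, i.e. the smallest normal subgroup of $X$ with soluble quotient. *)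

(* Defs.v *)
From HB Require Import structures.
From mathcomp Require Import all_boot all_fingroup all_solvable.
Set Implicit Arguments. Unset Strict Implicit. Unset Printing Implicit Defensive.
Local Open Scope group_scope.

(* A candidate chief factor function: [f gT G H K] is the value f(H/K, G).
   It is only meaningful when [chief_factor G K H] holds. *)
Definition cf_fun := forall gT : finGroupType, {set gT} -> {set gT} -> {set gT} -> bool.

Definition G_iso (gT : finGroupType) (G H K M N : {group gT}) : Prop :=
  exists phi : {morphism H / K >-> coset_of N},
    isom (H / K) (M / N) phi /\
    (forall g, g \in G -> forall x, x \in H / K ->
        phi (x ^ coset K g) = (phi x) ^ coset N g).

Definition is_chief_factor_function (f : cf_fun) : Prop :=
  (forall (gT : finGroupType) (G H K M N : {group gT}),
      chief_factor G K H -> chief_factor G N M -> G_iso G H K M N ->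
      f gT G H K = f gT G M N)
  /\
  (forall (gT : finGroupType) (G H K N : {group gT}),
      chief_factor G K H -> N <| G -> N \subset K ->
      f gT G H K = f (coset_of N) (G / N) (H / N) (K / N)).

Definition f_good (f : cf_fun) (gT : finGroupType) (G N : {set gT}) : bool :=
  [forall U : {group gT}, forall V : {group gT},
     (chief_factor G V U && (U \subset N)) ==> f gT G U V].

(* Z(G, f): the greatest normal subgroup of G all of whose chief factors
   below it have f-value 1; realised as the subgroup generated by all such
   normal subgroups (which is itself such a subgroup for a chief factor
   function, so it is the greatest one). *)
Definition Zf (f : cf_fun) (gT : finGroupType) (G : {set gT}) : {set gT} :=
  <<\bigcup_(N : {group gT} | (N <| G) && f_good f G N) (N : {set gT})>>.

Definition sol_residual (gT : finGroupType) (X : {set gT}) : {set gT} :=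
  \bigcap_(N : {group gT} | (N <| X) && solvable (X / N)) (N : {set gT}).

(* Main.v *)
Require Import Defs.
From HB Require Import structures.
From mathcomp Require Import all_boot all_fingroup all_solvable zify.
Set Implicit Arguments. Unset Strict Implicit. Unset Printing Implicit Defensive.
Local Open Scope group_scope.

Section Chief.
Variable gT : finGroupType.
Implicit Types G U V N W X Y A B M : {group gT}.

Lemma chiefP G V U :
  chief_factor G V U <-> [/\ U <| G, V <| G, V \proper U &
     forall N, N <| G -> V \subset N -> N \proper U -> N :=: V].
Proof.
split.
  case/andP=> /maxgroupP[/andP[pVU nVG] maxV] nsUG.
  split=> //.
    by rewrite /normal nVG (subset_trans (proper_sub pVU) (normal_sub nsUG)).
  by move=> N nsNG sVN pNU; rewrite (maxV N) // pNU normal_norm.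
case=> nsUG nsVG pVU maxV; apply/andP; split=> //; apply/maxgroupP.
split; first by rewrite pVU normal_norm.
move=> N /andP[pNU nNG] sVN; have nsNG : N <| G.
  by rewrite /normal nNG (subset_trans (proper_sub pNU) (normal_sub nsUG)).
exact: (maxV N nsNG sVN pNU).
Qed.

Lemma joinN G (A B : {group gT}) : A <| G -> B <| G -> A <*> B = A * B :> {set gT}.
Proof.
move=> nsA nsB; apply: norm_joinEr.
exact: subset_trans (normal_sub nsB) (normal_norm nsA).
Qed.

Lemma chief_trans G X' Y X : X' <| G -> Y <| G -> X' * Y = X ->
  (chief_factor G Y X <-> chief_factor G (X' :&: Y) X').
Proof.
move=> nsX'G nsYG defX.
have sX'X : X' \subset X by rewrite -defX mulG_subl.
have sYX : Y \subset X by rewrite -defX mulG_subr.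
split.
  case/chiefP=> nsXG _ pYX maxY; apply/chiefP; split=> //.
  - exact: normalI.
  - rewrite properE subsetIl /=; apply/negP=> sX'I.
    move: pYX; rewrite properE sYX /= -defX mulG_subG subxx andbT.
    by rewrite (subset_trans sX'I (subsetIr _ _)).
  move=> N nsNG sIN pNX'.
  have sNX' := proper_sub pNX'.
  have nsNG' : N <| G := nsNG.
  have eJ := joinN nsNG' nsYG.
  have nsNYG : (N <*> Y)%G <| G by rewrite /= eJ normalM.
  have sNYX : N * Y \subset X by rewrite -defX mulSg.
  have [pNYX | npNYX] := boolP ((N <*> Y)%G \proper X).
    have eNY := maxY _ nsNYG (joing_subr _ _) pNYX.
    move: eNY; rewrite /= eJ => eNY.
    have sNY : N \subset Y by rewrite -eNY mulG_subl.
    have sNI : N \subset X' :&: Y by rewrite subsetI sNX'.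
    by apply/eqP; rewrite eqEsubset sNI sIN.
  have eNYX : N * Y = X.
    by apply/eqP; rewrite eqEproper sNYX /=; move: npNYX; rewrite /= eJ.
  have : N * (Y :&: X') = N * Y :&: X' by rewrite group_modl.
  have sIN' : Y :&: X' \subset N by rewrite setIC.
  rewrite eNYX (mulGSid sIN').
  have -> : X :&: X' = X' by apply/setIidPr.
  by move=> eN; move: pNX'; rewrite eN properE subxx.
case/chiefP=> _ _ pIX' maxI; apply/chiefP; split=> //.
- by rewrite -defX; apply: normalM.
- rewrite properE sYX /=; apply/negP=> sXY.
  by move: pIX'; rewrite properE subsetI subxx (subset_trans sX'X sXY) andbF.
move=> N nsNG sYN pNX.
have nsMG : (N :&: X')%G <| G by exact: normalI.
have sIM : X' :&: Y \subset N :&: X' by rewrite setIC setSI.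
have [pMX' | npMX'] := boolP ((N :&: X')%G \proper X').
  have eM := maxI _ nsMG sIM pMX'.
  have : (N :&: X') * Y = N :&: (X' * Y) by rewrite group_modr.
  by move: eM => /= ->; rewrite defX (setIidPl (proper_sub pNX)) mulSGid ?subsetIr //.
have sX'N : X' \subset N.
  move: npMX'; rewrite properE subsetIr /= negbK.
  by move/subset_trans; apply; apply: subsetIl.
move: pNX; rewrite properE -defX mulG_subG sX'N sYN.
by rewrite andbF.
Qed.

Lemma giso_trans G X' Y X W : X' <| G -> Y <| G -> X' * Y = X ->
  gval W = Y :&: X' -> G_iso G X' W X Y.
Proof.
move=> nsX' nsY defX eW.
have -> : W = (Y :&: X')%G by apply: group_inj.
have nYX' : X' \subset 'N(Y) :=
  subset_trans (normal_sub nsX') (normal_norm nsY).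
have nsI : (Y :&: X')%G <| G by exact: normalI.
have nIX' : X' \subset 'N(Y :&: X') :=
  subset_trans (normal_sub nsX') (normal_norm nsI).
case: (second_isom nYX') => phi injphi phiE.
have phiC b : b \in X' -> phi (coset (Y :&: X') b) = coset Y b.
  move=> Xb; have sb : [set b] \subset X' by rewrite sub1set.
  have := phiE _ sb.
  rewrite !quotient_set1 ?(subsetP nIX') ?(subsetP nYX') // morphim_set1.
    by move/set1_inj.
  by rewrite mem_quotient.
exists phi; split.
  by apply/isomP; split=> //; rewrite phiE //= -defX quotientMidr.
move=> g Gg x /morphimP[a Na X'a ->].
have NgI : g \in 'N(Y :&: X') := subsetP (normal_norm nsI) g Gg.
have NgY : g \in 'N(Y) := subsetP (normal_norm nsY) g Gg.
rewrite -morphJ // phiC ?memJ_norm ?(subsetP (normal_norm nsX')) //.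
by rewrite phiC // morphJ // (subsetP nYX').
Qed.

Unset Implicit Arguments.
Variable f : cf_fun.
Set Implicit Arguments.
Hypothesis hf : is_chief_factor_function f.

Lemma f_trans G X' Y X W : X' <| G -> Y <| G -> X' * Y = X ->
  gval W = Y :&: X' ->
  (chief_factor G Y X <-> chief_factor G W X') /\
  (chief_factor G Y X -> f gT G X' W = f gT G X Y).
Proof.
move=> nsX' nsY defX eW.
have E : (chief_factor G Y X <-> chief_factor G W X').
  by rewrite eW setIC; apply: chief_trans.
split=> // cYX; apply: hf.1; first by apply/E.
  exact: cYX.
exact: giso_trans.
Qed.

Lemma split1 G X Y A : chief_factor G Y X -> A <| G -> X \subset A * Y ->
  chief_factor G (Y :&: A) (X :&: A) /\
  f gT G (X :&: A) (Y :&: A) = f gT G X Y.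
Proof.
case/chiefP=> nsX nsY pYX mx nsA sXAY.
have sYX := proper_sub pYX.
have cYX : chief_factor G Y X by apply/chiefP.
have nsXA : (X :&: A)%G <| G by exact: normalI.
have eX : (X :&: A) * Y = X by rewrite group_modr // (setIidPl sXAY).
have eW : gval (Y :&: A)%G = Y :&: (X :&: A).
  by rewrite /= setIA (setIidPl sYX).
have [E F] := f_trans nsXA nsY eX eW.
by split; [apply/E | apply: F].
Qed.

Lemma split2 G X Y A : chief_factor G Y X -> A <| G -> ~~ (X \subset A * Y) ->
  chief_factor G (Y <*> A) (X <*> A) /\
  f gT G X Y = f gT G (X <*> A) (Y <*> A).
Proof.
move=> cYX nsA nsXAY; have [nsX nsY pYX mx] := (chiefP _ _ _).1 cYX.
have sYX := proper_sub pYX.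
have nsYA : (Y <*> A)%G <| G by rewrite /= (joinN nsY nsA) normalM.
have eX : X * (Y <*> A) = X <*> A.
  by rewrite (joinN nsY nsA) (joinN nsX nsA) mulgA (mulGSid sYX).
have nsIG : (X :&: (Y <*> A))%G <| G by exact: normalI.
have eI : X :&: (Y <*> A) = Y.
  have sYI : Y \subset X :&: (Y <*> A) by rewrite subsetI sYX joing_subl.
  have [pI | npI] := boolP ((X :&: (Y <*> A))%G \proper X).
    by apply: mx.
  have eIX : X :&: (Y <*> A) = X.
    by apply/eqP; rewrite eqEproper subsetIl.
  case/negP: nsXAY; rewrite -(normC (subset_trans (normal_sub nsY) (normal_norm nsA))).
  by rewrite -(joinN nsY nsA) -eIX subsetIr.
have eW : gval Y = (Y <*> A) :&: X by rewrite setIC eI.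
have [E F] := f_trans nsX nsYA eX eW.
split; first by apply/E.
by rewrite F //; apply/E.
Qed.

Lemma f_goodP G N : reflect (forall U V : {group gT},
   chief_factor G V U -> U \subset N -> f gT G U V) (f_good f G N).
Proof.
apply: (iffP forallP) => [H U V cVU sUN | H U].
  by have /forallP/(_ V)/implyP := H U; apply; rewrite cVU sUN.
by apply/forallP=> V; apply/implyP=> /andP[cVU sUN]; apply: H.
Qed.

Lemma f_goodS G N M : N \subset M -> f_good f G M -> f_good f G N.
Proof.
move=> sNM /f_goodP H; apply/f_goodP=> U V cVU sUN.
exact: H _ _ cVU (subset_trans sUN sNM).
Qed.

Lemma f_good_mul G A B : A <| G -> B <| G -> f_good f G A -> f_good f G B ->
  f_good f G (A <*> B).
Proof.
move=> nsA nsB /f_goodP gA /f_goodP gB; apply/f_goodP=> U V cVU.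
move=> sUAB0; have sUAB : U \subset A * B by rewrite -(joinN nsA nsB); exact: sUAB0.
have [sUAV | nsUAV] := boolP (U \subset A * V).
  have [c1 <-] := split1 cVU nsA sUAV.
  by apply: gA c1 (subsetIr _ _).
have [c2 ->] := split2 cVU nsA nsUAV.
have [nsU nsV _ _] := (chiefP _ _ _).1 cVU.
have sX : U <*> A \subset B * (V <*> A).
  rewrite (joinN nsU nsA) (joinN nsV nsA).
  have cAB : A * B = B * A.
    by rewrite (normC (subset_trans (normal_sub nsA) (normal_norm nsB))).
  apply: (subset_trans (_ : U * A \subset B * A)); last exact/mulgS/mulG_subr.
  rewrite -(joinN nsB nsA) mulG_subG joing_subr andbT.
  by apply: subset_trans sUAB _; rewrite cAB mulG_subG joing_subl joing_subr.
have [c3 <-] := split1 c2 nsB sX.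
by apply: gB c3 (subsetIr _ _).
Qed.

Lemma Zf_spec G : exists N : {group gT},
  [/\ Zf f G = N, N <| G & f_good f G N].
Proof.
pose P := fun N : {group gT} => (N <| G) && f_good f G N.
have : exists M : {group gT}, P M && (\bigcup_(N : {group gT} | (N <| G) && f_good f G N) (N : {set gT}) \subset M).
  elim/big_rec: _ => [|N S PN [M /andP[PM sSM]]].
    exists 1%G; rewrite /P normal1 sub0set andbT.
    apply/f_goodP=> U V /chiefP[_ _ pVU _] sU1.
    by move: pVU; rewrite (trivgP sU1) properE sub1G andbF.
  exists (N <*> M)%G.
  case/andP: PN => nsN gN; case/andP: PM => nsM gM.
  rewrite /P -andbA; apply/and3P; split.
  - by rewrite /= (joinN nsN nsM) normalM.
  - exact: f_good_mul.
  by rewrite subUset joing_subl (subset_trans sSM) ?joing_subr.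
case=> M /andP[PM sSM]; exists M.
case/andP: (PM) => nsM gM; split=> //.
rewrite /Zf; apply/eqP; rewrite eqEsubset gen_subG sSM /=.
by rewrite sub_gen // (bigcup_sup M).
Qed.

Lemma Zf_max G N : N <| G -> f_good f G N -> N \subset Zf f G.
Proof.
by move=> nsN gN; rewrite /Zf sub_gen // (bigcup_sup N) // nsN.
Qed.
End Chief.
Section Residual.
Variable gT : finGroupType.
Implicit Types X N : {group gT}.

Lemma der_decr X a b : a <= b -> X^`(b) \subset X^`(a).
Proof.
elim: b => [|b IH]; first by rewrite leqn0 => /eqP->.
rewrite leq_eqVlt => /orP[/eqP->|]; first exact: subxx.
by move=> lt; apply: subset_trans (der_subS _ _) (IH lt).
Qed.

Lemma der_stab X : exists n, forall m, n <= m -> X^`(m) = X^`(n).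
Proof.
have H k : (exists2 j, j <= k & X^`(j.+1) = X^`(j)) \/ #|X^`(k)| + k <= #|X|.
  elim: k => [|k [[j jk ej]|IH]]; first by right; rewrite addn0.
    by left; exists j => //; apply: leqW.
  have [e|ne] := eqVneq (X^`(k.+1) : {set gT}) (X^`(k)).
    by left; exists k.
  right; have pk : X^`(k.+1) \proper X^`(k) by rewrite properEneq ne der_subS.
  by move: (proper_card pk) IH; rewrite addnS; move=> lt le; apply: leq_trans le; rewrite ltn_add2r.
have [[j _ ej]|] := H #|X|; last first.
  move=> le; exfalso; have h := cardG_gt0 (X^`(#|X|))%G; move: h le; rewrite /=; set c := #|_|; lia.
exists j => m; elim: m => [|m IH]; first by rewrite leqn0 => /eqP->.
rewrite leq_eqVlt => /orP[/eqP->//|] lt.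
by rewrite dergSn IH // -dergSn ej.
Qed.

Lemma res_der X : exists n, forall m, n <= m -> sol_residual X = X^`(m).
Proof.
have [n stab] := der_stab X; exists n => m nm; rewrite (stab m nm).
apply/eqP; rewrite eqEsubset; apply/andP; split.
  apply: (bigcap_inf (X^`(n))%G); rewrite der_normal /=.
  apply/derivedP; exists n.
  by rewrite -quotient_der ?normal_norm ?der_normal // trivg_quotient.
apply/bigcapsP=> N /andP[nsN /derivedP[k ek]].
have nN : X^`(k) \subset 'N(N) := subset_trans (der_sub _ _) (normal_norm nsN).
have sk : X^`(k) \subset N by rewrite -quotient_sub1 // quotient_der ?normal_norm // ek.
rewrite -(stab (n + k)) ?leq_addr //.
exact: subset_trans (der_decr X (leq_addl n k)) sk.
Qed.
End Residual.

Section Quo.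
Variable gT : finGroupType.
Implicit Types G U V N W X Y A B M K : {group gT}.

Lemma chiefQpre K G (U' V' : {group coset_of K}) : K <| G ->
  (chief_factor (G / K) V' U' <->
   chief_factor G (coset K @*^-1 V') (coset K @*^-1 U')).
Proof.
move=> nsK; have eG := quotientGK nsK.
split.
  case/chiefP=> nsU nsV pVU mx; apply/chiefP; split.
  - by rewrite -eG cosetpre_normal.
  - by rewrite -eG cosetpre_normal.
  - by rewrite cosetpre_proper.
  move=> N nsN sVN pNU.
  have sKN : K \subset N := subset_trans (sub_cosetpre _) sVN.
  have nsKN : K <| N.
    by rewrite /normal sKN (subset_trans (normal_sub nsN) (normal_norm nsK)).
  have eN := quotientGK nsKN.
  have nsN' : (N / K)%G <| G / K by exact: quotient_normal.
  rewrite -eN in sVN pNU *.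
  rewrite cosetpreSK in sVN; rewrite cosetpre_proper in pNU.
  by rewrite (mx _ nsN' sVN pNU).
case/chiefP=> nsU nsV pVU mx; apply/chiefP; split.
- by rewrite -cosetpre_normal eG.
- by rewrite -cosetpre_normal eG.
- by rewrite -cosetpre_proper.
move=> N' nsN' sVN pNU.
have nsN : (coset K @*^-1 N')%G <| G by rewrite /= -eG cosetpre_normal.
have := mx _ nsN; rewrite /= cosetpreSK cosetpre_proper => /(_ sVN pNU) e.
by rewrite -(cosetpreK N') e cosetpreK.
Qed.

Lemma chiefQ K G U V : K <| G -> K \subset V -> chief_factor G V U ->
  chief_factor (G / K) (V / K) (U / K).
Proof.
move=> nsK sKV cVU; have [nsU nsV pVU _] := (chiefP _ _ _).1 cVU.
have nK X : X <| G -> K \subset X -> K <| X.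
  move=> nsX sKX.
  by rewrite /normal sKX (subset_trans (normal_sub nsX) (normal_norm nsK)).
apply/(chiefQpre _ _ nsK).
have nsKV := nK _ nsV sKV.
have nsKU := nK _ nsU (subset_trans sKV (proper_sub pVU)).
by rewrite !quotientGK.
Qed.
End Quo.

Section Core.
Variable gT : finGroupType.
Unset Implicit Arguments.
Variable f : cf_fun.
Set Implicit Arguments.
Hypothesis hf : is_chief_factor_function f.
Variables (G H T K Z W : {group gT}).
Hypotheses (nsK : K <| G) (cTH : chief_factor G T H) (nab : ~~ abelian (H / T))
  (sKT : K \subset T) (nsZ : Z <| G) (sKZ : K \subset Z)
  (PZ : forall U V : {group gT}, chief_factor G V U -> K \subset V ->
          U \subset Z -> f gT G U V)
  (MZ : forall N : {group gT}, N <| G -> K \subset N ->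
     (forall U V : {group gT}, chief_factor G V U -> K \subset V ->
          U \subset N -> f gT G U V) -> N \subset Z)
  (eW : gval W = Z :&: T).

Let nsH : H <| G. Proof. by case/chiefP: cTH. Qed.
Let nsT : T <| G. Proof. by case/chiefP: cTH. Qed.
Let pTH : T \proper H. Proof. by case/chiefP: cTH. Qed.
Let sTH : T \subset H. Proof. exact: proper_sub pTH. Qed.
Let maxT : forall N : {group gT}, N <| G -> T \subset N -> N \proper H -> N :=: T.
Proof. by case/chiefP: cTH. Qed.
Let nsW : W <| G. Proof. by rewrite eW normalI. Qed.
Let sKW : K \subset W. Proof. by rewrite eW subsetI sKZ sKT. Qed.
Let nsZ2 : (Z :&: H)%G <| G. Proof. exact: normalI. Qed.
Let sWZ2 : W \subset Z :&: H. Proof. by rewrite eW setIS. Qed.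
Let eW' : gval W = T :&: (Z :&: H).
Proof. by rewrite eW setICA (setIidPl sTH). Qed.

Lemma dich : (Z :&: H = W :> {set gT}) \/
  [/\ (Z :&: H) * T = H, chief_factor G W (Z :&: H) & f gT G H T].
Proof.
have eJ := joinN nsZ2 nsT.
have nsJ : ((Z :&: H) <*> T)%G <| G by rewrite /= eJ normalM.
have sJH : (Z :&: H) * T \subset H by rewrite mulG_subG subsetIr sTH.
have [pJ | npJ] := boolP (((Z :&: H) <*> T)%G \proper H).
  have := maxT nsJ (joing_subr _ _) pJ; rewrite /= eJ => eJT.
  left; apply/eqP; rewrite eqEsubset sWZ2 andbT eW subsetI subsetIl /=.
  by rewrite -eJT mulG_subl.
have eH : (Z :&: H) * T = H.
  by apply/eqP; rewrite eqEproper sJH; move: npJ; rewrite /= eJ.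
have [E F] := f_trans hf nsZ2 nsT eH eW'.
right; split=> //; first by apply/E.
by rewrite -F // PZ ?subsetIl //; apply/E.
Qed.


Let sHG : H \subset G. Proof. exact: normal_sub nsH. Qed.
Let nWG : G \subset 'N(W). Proof. exact: normal_norm nsW. Qed.
Let nWH : H \subset 'N(W). Proof. exact: subset_trans sHG nWG. Qed.
Let nWT : T \subset 'N(W). Proof. exact: subset_trans sTH nWH. Qed.
Let nsWH : W <| H. Proof. by apply: normalS nsW; rewrite ?(subset_trans sWZ2) ?subsetIr. Qed.

Lemma part_i : Z :&: H != W ->
  coset W @*^-1 (sol_residual 'C_(H / W)(T / W)) = Z :&: H /\
  #|(Z :&: H) / W| = #|H / T|.
Proof.
case: dich => [-> /eqP//| [eH cWZ2 _] _].
have [_ _ pWZ2 maxW] := (chiefP _ _ _).1 cWZ2.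
have [phi [isoP _]] := giso_trans nsZ2 nsT eH eW'.
have isoZH : ((Z :&: H) / W)%G \isog (H / T)%G.
  exact: isom_isog (subxx _) isoP.
have sZ2H : Z :&: H \subset H := subsetIr _ _.
have sZ2G : Z :&: H \subset G := subset_trans sZ2H sHG.
have nWZ2 : Z :&: H \subset 'N(W) := subset_trans sZ2H nWH.
have nsD : ((Z :&: H)^`(1))%G <| G := char_normal_trans (der_char 1 _) nsZ2.
have eD := joinN nsD nsW.
have nsDW : (((Z :&: H)^`(1))%G <*> W)%G <| G by rewrite /= eD normalM.
have sDZ2 : (Z :&: H)^`(1) * W \subset Z :&: H.
  by rewrite mulG_subG der_sub sWZ2.
have eDW : (Z :&: H)^`(1) * W = Z :&: H.
  have [pD | npD] := boolP ((((Z :&: H)^`(1))%G <*> W)%G \proper (Z :&: H)%G).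
    have := maxW _ nsDW (joing_subr _ _) pD; rewrite /= eD => eDW.
    have sD : (Z :&: H)^`(1) \subset W by rewrite -eDW mulG_subl.
    have := sub_der1_abelian sD; rewrite (isog_abelian isoZH) /=.
    by move=> ab; move: nab; rewrite ab.
  by apply/eqP; rewrite eqEproper sDZ2; move: npD; rewrite /= eD.
have perf : ((Z :&: H) / W)^`(1) = (Z :&: H) / W.
  by rewrite -quotient_der // -quotientMidr eDW.
have perfk k : ((Z :&: H) / W)^`(k) = (Z :&: H) / W.
  elim: k => [//|k IH]; by rewrite dergSn IH -derg1 perf.
have sZ2T : [~: Z :&: H, T] \subset W.
  rewrite eW' [T :&: _]setIC.
  apply: (@commg_subI _ (Z :&: H) T (Z :&: H)%G T).
    by apply/subsetIP; split=> //; apply: subset_trans sZ2G (normal_norm nsT).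
  by apply/subsetIP; split=> //; apply: subset_trans (subset_trans sTH sHG) (normal_norm nsZ2).
have sZ2Cq : (Z :&: H) / W \subset 'C_(H / W)(T / W).
  by rewrite subsetI quotientS // quotient_cents2r.
have [n stab] := res_der ('C_(H / W)(T / W))%G.
have eR : sol_residual 'C_(H / W)(T / W) = (Z :&: H) / W.
  rewrite (stab n.+1) //; apply/eqP; rewrite eqEsubset; apply/andP; split.
    apply: subset_trans (der_decr _ (ltn0Sn n)) _.
    apply: der1_min.
      rewrite (subset_trans (subsetIl _ _)) // normal_norm //.
      apply: quotient_normal; apply: normalS nsZ2 => //.
    have eHq : H / W = (Z :&: H) / W * (T / W) by rewrite -{1}eH quotientMl.
    have eCq : 'C_(H / W)(T / W) = (Z :&: H) / W * (T / W :&: 'C_(H / W)(T / W)).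
      by rewrite group_modl // -eHq; apply/esym/setIidPr; apply: subsetIl.
    rewrite /= {1}eCq quotientMidl quotient_abelian //.
    rewrite /abelian (subset_trans _ (centS (subsetIl _ _))) //.
    by rewrite (subset_trans (subsetIr _ _)) ?subsetIr.
  by rewrite -{1}(perfk n.+1) dergS.
have nsWZ2 : W <| Z :&: H by apply: normalS nsW.
by rewrite eR quotientGK //; split=> //; apply: card_isog.
Qed.


Let abTC : abelian (T / W :&: 'C_(H / W)(T / W)).
Proof.
rewrite /abelian (subset_trans _ (centS (subsetIl _ _))) //.
by rewrite (subset_trans (subsetIr _ _)) ?subsetIr.
Qed.

Lemma part_ii : f gT G H T ->
  #|coset W @*^-1 (sol_residual 'C_(H / W)(T / W)) / W| = #|H / T| ->
  Z :&: H != W.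
Proof.
move=> fHT ecard; apply/negP => /eqP eZ2.
have [n stab] := res_der ('C_(H / W)(T / W))%G.
have eR := stab n (leqnn n); rewrite /= in eR.
rewrite eR in ecard.
set Cq := 'C_(H / W)(T / W) in eR ecard *.
set R := (Cq^`(n))%G.
have perfR : R^`(1) = R.
  by rewrite /= derg1 -dergSn -(stab n.+1).
have nsHq : H / W <| G / W := quotient_normal _ nsH.
have nsTq : T / W <| G / W := quotient_normal _ nsT.
have nsCq : (Cq)%G <| G / W.
  apply/andP; split; first exact: subset_trans (subsetIl _ _) (normal_sub nsHq).
  rewrite /Cq; apply: normsI; first exact: normal_norm.
  by apply: norms_cent; apply: normal_norm.
have nsR : R <| G / W := char_normal_trans (der_char n _) nsCq.
have sRCq : R \subset Cq := der_sub n _.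
set C := (coset W @*^-1 R)%G.
have nsC : C <| G by rewrite -(quotientGK nsW) /= cosetpre_normal.
have sCH : C \subset H.
  by rewrite /= sub_cosetpre_quo // (subset_trans sRCq) ?subsetIl.
have eCW : C / W = R by rewrite /= cosetpreK.
have sWC : W \subset C := sub_cosetpre _.
rewrite -/C in ecard.
have R1 : ~ (R \subset [1 coset_of W]).
  move=> sR1; move: ecard; rewrite eCW (trivgP sR1) cards1 => e.
  have : (H / T)%G :==: 1 by rewrite trivg_card1 -e.
  by move/eqP=> /= e1; move: nab; rewrite e1 abelian1.
have nTC : C \subset 'N(T) := subset_trans (normal_sub nsC) (normal_norm nsT).
have eJ := joinN nsC nsT.
have nsCT : (C <*> T)%G <| G by rewrite /= eJ normalM.
have sCTH : C * T \subset H by rewrite mulG_subG sCH sTH.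
have eCT : C * T = H.
  have [pJ | npJ] := boolP ((C <*> T)%G \proper H).
    have := maxT nsCT (joing_subr _ _) pJ; rewrite /= eJ => eJT.
    have sCT : C \subset T by rewrite -eJT mulG_subl.
    have sRT : R \subset T / W by rewrite -eCW quotientS.
    have abR : abelian R.
      by apply: abelianS abTC; rewrite subsetI sRT.
    by case: R1; rewrite -perfR; move/derG1P: abR => ->.
  by apply/eqP; rewrite eqEproper sCTH; move: npJ; rewrite /= eJ.
have nWC : C \subset 'N(W) := subset_trans sCH nWH.
have eI : C :&: T = W.
  have i1 : #|C : W| = #|C : C :&: T|.
    rewrite -card_quotient // ecard (card_quotient (subset_trans sHG (normal_norm nsT))).
    by rewrite -eCT (normC nTC) indexMg indexgI.
  have sWI : W \subset C :&: T by rewrite subsetI sWC eW subsetIr.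
  apply/eqP; rewrite eq_sym eqEcard sWI /=.
  have l1 := Lagrange (subset_trans sWI (subsetIl _ _)).
  have l2 := Lagrange (subsetIl C T).
  rewrite -i1 in l2; rewrite -l1 in l2.
  have p : 0 < #|C : W| by exact: indexg_gt0.
  by move/eqP: l2; rewrite eqn_pmul2r // => /eqP->.
have eWTC : gval W = T :&: C by rewrite -eI setIC.
have [E F] := f_trans hf nsC nsT eCT eWTC.
have cWC : chief_factor G W C by apply/E.
have fC : f gT G C W by rewrite F.
have [_ _ pWC maxW] := (chiefP _ _ _).1 cWC.
have sCZ : C \subset Z.
  apply: MZ nsC (subset_trans sKW sWC) _ => U V cVU sKV sUC.
  have [nsU nsV pVU _] := (chiefP _ _ _).1 cVU.
  have [sUWV | nsUWV] := boolP (U \subset W * V).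
    have [c1 <-] := split1 hf cVU nsW sUWV.
    apply: PZ c1 _ _; first by rewrite subsetI sKV sKW.
    by rewrite (subset_trans (subsetIr _ _)) // eW subsetIl.
  have [c2 ->] := split2 hf cVU nsW nsUWV.
  have [nsUW nsVW pVUW _] := (chiefP _ _ _).1 c2.
  have sUWC : U <*> W \subset C by rewrite join_subG sUC.
  have eVW := maxW _ nsVW (joing_subr _ _) (proper_sub_trans pVUW sUWC).
  have eUW : U <*> W = C :> {set gT}.
    apply/eqP; rewrite eqEproper sUWC /=; apply/negP=> pUWC.
    have := maxW _ nsUW (joing_subr _ _) pUWC => eUW.
    by move: pVUW; rewrite eVW eUW properE subxx andbF.
  have e1 : f gT G (U <*> W) (V <*> W) = f gT G C W.
    by congr (f gT G _ _); [exact: eUW | exact: eVW].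
  by rewrite e1.
have sCW : C \subset W by rewrite -eZ2 subsetI sCZ sCH.
by case: R1; rewrite -eCW -(trivg_quotient W) quotientS.
Qed.

End Core.

Unset Implicit Arguments.

Theorem mainTheorem4 (f : cf_fun) (hf : is_chief_factor_function f)
    (gT : finGroupType) (G K H T : {group gT})
    (nKG : K <| G) (chHT : chief_factor G T H) (nab : ~~ abelian (H / T))
    (sKT : K \subset T) :
  let Z1 := coset K @*^-1 (Zf f (G / K) :&: (T / K)) in
  let Z2 := coset K @*^-1 (Zf f (G / K) :&: (H / K)) in
  let C := coset Z1 @*^-1 (sol_residual 'C_(H / Z1)(T / Z1)) in
  (f gT G H T = false -> Z2 = Z1) /\
  (f gT G H T = true ->
     (Z2 != Z1 <-> #|C / Z1| = #|H / T|) /\ (Z2 != Z1 -> Z2 = C)).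
Proof.
have [N0 [eZf nsN0 gN0]] := Zf_spec hf (G / K)%G.
have [nsH nsT pTH _] := (chiefP _ _ _).1 chHT.
have sTH := proper_sub pTH.
have nK X : X <| G -> K \subset X -> K <| X.
  move=> nsX sKX.
  by rewrite /normal sKX (subset_trans (normal_sub nsX) (normal_norm nKG)).
set Z := (coset K @*^-1 N0)%G.
have nsZ : Z <| G by rewrite -(quotientGK nKG) /= cosetpre_normal.
have sKZ : K \subset Z := sub_cosetpre _.
have PZ : forall U V : {group gT}, chief_factor G V U -> K \subset V ->
          U \subset Z -> f gT G U V.
  move=> U V cVU sKV sUZ.
  have [nsU _ pVU _] := (chiefP _ _ _).1 cVU.
  rewrite (hf.2 _ _ _ _ _ cVU nKG sKV).
  move/f_goodP: gN0; apply; first exact: chiefQ.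
  rewrite /= sub_quotient_pre //.
  exact: subset_trans (normal_sub nsU) (normal_norm nKG).
have MZ : forall N : {group gT}, N <| G -> K \subset N ->
     (forall U V : {group gT}, chief_factor G V U -> K \subset V ->
          U \subset N -> f gT G U V) -> N \subset Z.
  move=> N nsN sKN hN.
  have nsKN := nK _ nsN sKN.
  have gN : f_good f (G / K) (N / K).
    apply/(f_goodP f (G / K)%G (N / K)%G) => U' V' cVU' sUN.
    have c := (chiefQpre U' V' nKG).1 cVU'.
    have := hN _ _ c (sub_cosetpre _) _.
    rewrite (hf.2 _ _ _ _ _ c nKG (sub_cosetpre _)) !cosetpreK; apply.
    by rewrite -(quotientGK nsKN) cosetpreSK.
  have := Zf_max (quotient_normal K nsN) gN; rewrite eZf => sNN0.
  by rewrite -(quotientGK nsKN) cosetpreSK.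
have eZ1 : coset K @*^-1 (Zf f (G / K) :&: (T / K)) = Z :&: T.
  by rewrite morphpreI eZf quotientGK // nK.
have eZ2 : coset K @*^-1 (Zf f (G / K) :&: (H / K)) = Z :&: H.
  by rewrite morphpreI eZf quotientGK // nK // (subset_trans sKT sTH).
move=> Z1 Z2 C; rewrite {}/C {}/Z2 {}/Z1 eZ1 eZ2.
have eW : gval (Z :&: T)%G = Z :&: T by [].
split.
  move=> fF; case: (dich hf chHT sKT nsZ sKZ PZ eW) => // [[_ _ fT]].
  by move: fF; rewrite fT.
move=> fT; split; last first.
  by move=> ne; have [-> _] := part_i hf chHT nab sKT nsZ sKZ PZ eW ne.
split; first by move=> ne; have [-> ->] := part_i hf chHT nab sKT nsZ sKZ PZ eW ne.
have := part_ii hf chHT nab sKT nsZ sKZ PZ MZ eW fT. exact.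
Qed.
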